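(* Suppose a first-order method in Algorithm Class 1 is applied to instance $\mathcal P$ from $x^{(0)}=0$ and generates a sequence $\{x^{(t)}\}_{t\ge0}$, with $x^{(t)}=(x_1^{(t)\top},\dots,x_m^{(t)\top})^\top$, $x_i^{(t)}\in\mathbb R^{\bar d}$. Then for any $\bar j\in\{2,3,\dots,\bar d\}$, $\mathrm{supp}(x_i^{(t)})\subset\{1,\dots,\bar j-1\}$ for all $i=1,\dots,m$ and all integers $0\le t\le 1+m(\bar j-2)/6$.
   Context: $\mathrm{supp}(z)=\{j:[z]_j\ne0\}$. Algorithm Class 1 (for problem $\min f_0(x)+g(x)$ s.t. $Ax+b=0$): given $x^{(0)}$, for every $t\ge1$, $x^{(t)}\in\mathrm{span}\{\xi^{(t)},\mathrm{prox}_{\eta_tg}(\xi^{(t)})\}$ for some $\eta_t>0$ and some $\xi^{(t)}\in\mathrm{span}\{x^{(s)},\nabla f_0(x^{(s)}),A^\top b,A^\top Ax^{(s)}\}_{s=0}^{t-1}$, where $\mathrm{prox}_{\eta g}(x)=\arg\min_{x'}\{g(x')+\frac1{2\eta}\|x'-x\|^2\}$. Instance $\mathcal P$: fix $\epsilon\in(0,1)$, $L_f>0$, integers $m_1\ge2$, $m_2\ge1$ with $m_1m_2$ even, $m=3m_1m_2$, an odd integer $\bar d\ge5$, $d=m\bar d$. Write $x=(x_1^\top,\dots,x_m^\top)^\top$, $x_i\in\mathbb R^{\bar d}$; $[z]_j$ is the $j$-th coordinate. $J_p\in\mathbb R^{(p-1)\times p}$ has $-1$ at $(k,k)$, $1$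 at $(k,k+1)$, zero elsewhere. $\mathcal M=\{im_1:i=1,\dots,3m_2-1\}$, $\mathcal M^C=\{1,\dots,m-1\}\setminus\mathcal M$, $\bar A=mL_f(J_{\mathcal M}\otimes I_{\bar d})$, $A=mL_f(J_{\mathcal M^C}\otimes I_{\bar d})$ with $J_{\mathcal M},J_{\mathcal M^C}$ the rows of $J_m$ indexed by $\mathcal M,\mathcal M^C$; $b=0$. Choose $\beta>(50\pi+1+\|A\|)\sqrt m\,\epsilon$; $g(x)=\beta\sum_{i\in\mathcal M}\|x_i-x_{i+1}\|_1$. $\Psi(u)=0$ ($u\le0$), $1-e^{-u^2}$ ($u>0$); $\Phi(v)=4\arctan v+2\pi$. For $z\in\mathbb R^{\bar d}$: $\varphi(z,1)=-\Psi(1)\Phi([z]_1)$, $\varphi(z,j)=\Psi(-[z]_{j-1})\Phi(-[z]_j)-\Psi([z]_{j-1})\Phi([z]_j)$ ($2\le j\le\bar d$); $h_i(z)=\varphi(z,1)+3\sum_{j=1}^{\lfloor\bar d/2\rfloor}\varphi(z,2j)$ for $1\le i\le m/3$, $h_i(z)=\varphi(z,1)$ for $m/3+1\le i\le 2m/3$, $h_i(z)=\varphi(z,1)+3\sum_{j=1}^{\lfloor\bar d/2\rfloor}\varphi(z,2j+1)$ for $2m/3+1\le i\le m$. $f_i(z)=\frac{300\pi\epsilon^2}{mL_f}h_i(\frac{\sqrt mL_fz}{150\pi\epsilon})$, $f_0(x)=\sum_{i=1}^mf_i(x_i)$. Instance $\mathcal P$ is $\min_x f_0(x)+g(x)$ s.t.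 $Ax+b=0$. *)

(* Defs.v *)
From HB Require Import structures.
From mathcomp Require Import all_boot all_order all_algebra.
From mathcomp Require Import all_classical all_reals all_analysis.
Set Implicit Arguments. Unset Strict Implicit. Unset Printing Implicit Defensive.
Import Order.TTheory GRing.Theory Num.Theory.
Local Open Scope ring_scope.
Local Open Scope classical_set_scope.

Section Defs.
Variable R : realType.

Definition sqnorm n (v : 'cV[R]_n) : R := \sum_k (v k 0) ^+ 2.
Definition enorm n (v : 'cV[R]_n) : R := Num.sqrt (sqnorm v).

Definition opnorm p q (A : 'M[R]_(p, q)) : R :=
  sup [set enorm (A *m v) | v in [set v : 'cV[R]_q | enorm v <= 1]].

(* block structure: coordinates of x in R^(m*dbar) are indexed by pairs
   (i, j) : 'I_m * 'I_dbar, x = (x_1^T, ..., x_m^T)^T, via mxvec_index *)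
Definition unpair p r (k : 'I_(p * r)) : 'I_p * 'I_r :=
  enum_val (cast_ord (esym (mxvec_cast p r)) k).
Definition blk m dbar (x : 'cV[R]_(m * dbar)) (i : 'I_m) : 'cV[R]_dbar :=
  \col_j x (mxvec_index i j) 0.

Definition kron p q r s (A : 'M[R]_(p, q)) (B : 'M[R]_(r, s)) : 'M[R]_(p * r, q * s) :=
  \matrix_(k, l) (A (unpair k).1 (unpair l).1 * B (unpair k).2 (unpair l).2).

(* support, with 1-based coordinate indices *)
Definition supp n (z : 'cV[R]_n) : set nat :=
  [set k | exists j : 'I_n, k = (val j).+1 /\ z j 0 != 0].

(* 1-based coordinate access [z]_j (0 outside 1..n) *)
Definition coord n (z : 'cV[R]_n) (j : nat) : R :=
  oapp (fun k : 'I_n => z k 0) 0 (insub j.-1).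

Definition unitv n (k : 'I_n) : 'cV[R]_n := delta_mx k 0.
Definition grad n (f : 'cV[R]_n -> R) (x : 'cV[R]_n) : 'cV[R]_n :=
  \col_k derive1 (fun s : R => f (x + s *: unitv k)) 0.

Definition is_prox n (g : 'cV[R]_n -> R) (eta : R) (x p : 'cV[R]_n) : Prop :=
  forall x', g p + sqnorm (p - x) / (2 * eta) <= g x' + sqnorm (x' - x) / (2 * eta).

Definition algorithm_class1 n rA (f0 g : 'cV[R]_n -> R) (A : 'M[R]_(rA, n))
    (b : 'cV[R]_rA) (x : nat -> 'cV[R]_n) : Prop :=
  forall t : nat, (1 <= t)%N ->
    exists eta : R, 0 < eta /\
    exists xi : 'cV[R]_n,
      (exists c1 c2 c3 c4 : nat -> R,
         xi = \sum_(s < t) (c1 s *: x s + c2 s *: grad f0 (x s)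
                            + c3 s *: (A^T *m b) + c4 s *: (A^T *m (A *m x s)))) /\
    exists p : 'cV[R]_n, is_prox g eta xi p /\
    exists a1 a2 : R, x t = a1 *: xi + a2 *: p.

(* J_p restricted to a set of rows: row k (0-based, i.e. row k+1 of J_p)
   has -1 at column k and +1 at column k+1.  Rows listed in increasing order. *)
Definition Jrows p (S : {set 'I_p}) : 'M[R]_(#|S|, p) :=
  \matrix_(r, c) (if c == enum_val r then -1
                  else if val c == (val (enum_val r)).+1 then 1 else 0).

(* M^C = {1..m-1} \ {i m1}; as 0-based row indices k (row k+1) *)
Definition MC m m1 : {set 'I_m} := [set k : 'I_m | ((val k).+1 < m)%N && ~~ (m1 %| (val k).+1)%N].

Definition Amat m m1 dbar (Lf : R) : 'M[R]_(#|MC m m1| * dbar, m * dbar) :=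
  (m%:R * Lf) *: kron (Jrows (MC m m1)) (1%:M : 'M[R]_dbar).

(* g(x) = beta * sum_{i in M} ||x_i - x_{i+1}||_1, M = {i m1 : 1 <= i <= 3 m2 - 1},
   written with 0-based block indices i, i' (1-based blocks i+1, i'+1 = i+2) *)
Definition gfun m m1 dbar (beta : R) (x : 'cV[R]_(m * dbar)) : R :=
  beta * \sum_(i : 'I_m) \sum_(i' : 'I_m | (val i' == (val i).+1) && (m1 %| (val i).+1)%N)
          \sum_(j < dbar) `|blk x i j 0 - blk x i' j 0|.

Definition Psi (u : R) : R := if u <= 0 then 0 else 1 - expR (- u ^+ 2).
Definition Phi (v : R) : R := 4 * atan v + 2 * pi.

(* varphi(z, j), j 1-based *)
Definition varphi n (z : 'cV[R]_n) (j : nat) : R :=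
  if j == 1%N then - Psi 1 * Phi (coord z 1)
  else Psi (- coord z j.-1) * Phi (- coord z j) - Psi (coord z j.-1) * Phi (coord z j).

(* h_i, i 1-based *)
Definition hfun m dbar (i : nat) (z : 'cV[R]_dbar) : R :=
  if (i <= m %/ 3)%N then
    varphi z 1 + 3 * \sum_(1 <= j < (dbar %/ 2).+1) varphi z (2 * j)
  else if (i <= 2 * m %/ 3)%N then varphi z 1
  else varphi z 1 + 3 * \sum_(1 <= j < (dbar %/ 2).+1) varphi z (2 * j + 1).

Definition ffun_i m dbar (eps Lf : R) (i : nat) (z : 'cV[R]_dbar) : R :=
  (300 * pi * eps ^+ 2 / (m%:R * Lf)) *
    @hfun m dbar i ((Num.sqrt m%:R * Lf / (150 * pi * eps)) *: z).

Definition f0fun m dbar (eps Lf : R) (x : 'cV[R]_(m * dbar)) : R :=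
  \sum_(i < m) @ffun_i m dbar eps Lf (val i).+1 (blk x i).

End Defs.

(* Main.v *)
Require Import Defs.
From HB Require Import structures.
From mathcomp Require Import all_boot all_order all_algebra.
From mathcomp Require Import all_classical all_reals all_analysis.
From mathcomp Require Import ring lra zify.
Import Order.TTheory GRing.Theory Num.Theory.
Local Open Scope ring_scope.
Local Open Scope classical_set_scope.

Lemma unpairK p r (i : 'I_p) (j : 'I_r) : unpair (mxvec_index i j) = (i, j).
Proof. by rewrite /unpair /mxvec_index cast_ordK enum_rankK. Qed.

Lemma mxvec_index_eq p r (i i' : 'I_p) (j j' : 'I_r) :
  (mxvec_index i j == mxvec_index i' j') = ((i == i') && (j == j')).
Proof.
apply/eqP/andP => [h|[/eqP-> /eqP->]//].
by have := congr1 (@unpair p r) h; rewrite !unpairK => -[-> ->].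
Qed.

Section NatPart.
Local Open Scope nat_scope.
Definition Lf_ (D c u : nat) : nat :=
  if (c <= 1)%N then 1%N else (2 + (c-2)*(D+1) + (if odd c then 2*D - u else u - D))%N.

Lemma L_even D c u : (2 <= c)%N -> ~~ odd c -> (u <= D)%N -> (Lf_ D c u <= (Lf_ D c.-1 u).+1)%N.
Proof.
case: c => [|[|[|c]]] //= _.
  by rewrite /Lf_ /=; lia.
move=> ho hu; rewrite /Lf_ /= !subSS !subn0 !negbK in ho *.
rewrite ho /= mulSn; move: (c * (D + 1))%N => q; lia.
Qed.

Lemma L_odd D c u : (2 <= c)%N -> odd c -> (2 * D <= u)%N -> (Lf_ D c u <= (Lf_ D c.-1 u).+1)%N.
Proof.
case: c => [|[|[|c]]] //= _.
move=> ho hu; rewrite /Lf_ /= !subSS !subn0 !negbK in ho *.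
rewrite (negbTE ho) /= mulSn; move: (c * (D + 1))%N => q; lia.
Qed.

Lemma L_lip D c u u' : (u <= u'.+1)%N -> (u' <= u.+1)%N -> (Lf_ D c u <= (Lf_ D c u').+1)%N.
Proof.
rewrite /Lf_; case: (c <= 1)%N => //; case: (odd c); move: ((c - 2) * (D + 1))%N => q; lia.
Qed.

Lemma L_low D c u : (2 <= c)%N -> (2 + (c-2)*(D+1) <= Lf_ D c u)%N.
Proof.
rewrite /Lf_; case: ifP => [|_ _]; first lia.
move: ((c - 2) * (D + 1))%N => q; lia.
Qed.

Lemma uu_P m1 m2 : (0 < m1)%N -> (0 < m2)%N ->
  (m1 * m2 - 1 - (m1 * m2 - 1) %/ m1 = m2 * (m1 - 1))%N.
Proof.
move=> h1 h2.
have [a ->] : exists a, m1 = (a + 1)%N by exists m1.-1; lia.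
have [b ->] : exists b, m2 = (b + 1)%N by exists m2.-1; lia.
have e : ((a + 1) * (b + 1) - 1 = b * (a + 1) + a)%N by nia.
rewrite e divnMDl ?addn1 // divn_small //.
rewrite -addn1; nia.
Qed.

Lemma uu_2P m1 m2 : (0 < m1)%N ->
  (2 * m1 * m2 - (2 * m1 * m2) %/ m1 = 2 * (m2 * (m1 - 1)))%N.
Proof.
move=> h1; rewrite (mulnC 2) -mulnA mulKn //.
case: m1 h1 => // a _; rewrite subSS subn0; nia.
Qed.

End NatPart.

Section S.
Variable R : realType.

Lemma Psi0 : Psi (0:R) = 0.
Proof. by rewrite /Psi lexx. Qed.

Lemma Psi_ge0 (u : R) : 0 <= Psi u.
Proof.
rewrite /Psi; case: ifP => // _; rewrite subr_ge0 expR_le1 oppr_le0.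
exact: sqr_ge0.
Qed.

Lemma Psi_le (u : R) : Psi u <= u ^+ 2.
Proof.
rewrite /Psi; case: ifP => _; first exact: sqr_ge0.
have := expR_ge1Dx (- u ^+ 2); lra.
Qed.

Lemma Phi_bound (v : R) : `|Phi v| <= 4 * pi.
Proof.
rewrite /Phi; have h1 := atan_ltpi2 v; have h2 := atan_gtNpi2 v.
have hp := pi_gt0 R.
rewrite ger0_norm; lra.
Qed.

Lemma coordD n (w : 'cV[R]_n) (c0 : 'I_n) (r : R) j :
  Defs.coord (w + r *: delta_mx c0 0) j =
  Defs.coord w j + (if j.-1 == val c0 then r else 0).
Proof.
rewrite /Defs.coord; case: (ltnP j.-1 n) => h.
  rewrite !insubT /= !mxE eqxx andbT.
  have -> : (Ordinal h == c0) = (j.-1 == val c0) by [].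
  by case: (_ == _); rewrite ?mulr1 ?mulr0.
rewrite !insubF ?ltnNge ?h //= add0r; case: eqP => // e.
by move: h; rewrite e leqNgt ltn_ord.
Qed.

Lemma coordZ n (w : 'cV[R]_n) (a : R) j :
  Defs.coord (a *: w) j = a * Defs.coord w j.
Proof.
rewrite /Defs.coord; case: insubP => [k _ kv|] /=; first by rewrite mxE.
by rewrite mulr0.
Qed.

Lemma coordS n (w : 'cV[R]_n) (c0 : 'I_n) :
  Defs.coord w (val c0).+1 = w c0 0.
Proof.
rewrite /Defs.coord; case: insubP => [k _ kv|] /=.
  by congr (w _ 0); apply: val_inj.
by rewrite ltn_ord.
Qed.

Lemma varphiD n (w : 'cV[R]_n) (c0 : 'I_n) (r : R) (j : nat) :
  (1 <= val c0)%N -> w c0 0 = 0 ->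
  (j != (val c0).+1 \/ Defs.coord w (val c0) = 0) ->
  `|varphi (w + r *: delta_mx c0 0) j - varphi w j| <= 8 * pi * r ^+ 2.
Proof.
move=> c1 wc0 hj.
have hp := pi_ge0 R; have r2 := sqr_ge0 r.
have hK : 0 <= 8 * pi * r ^+ 2 by rewrite mulr_ge0 // mulr_ge0.
rewrite /varphi; case: ifP => [/eqP jj|jn1].
  subst j; rewrite coordD /= (_ : (0 == val c0) = false) ?addr0 ?subrr ?normr0 //.
  by apply/negbTE; rewrite eq_sym -lt0n.
rewrite !coordD.
case: (boolP (j.-1 == val c0)) => h1.
  have ej : j = (val c0).+1 by move/eqP: h1; lia.
  have h2 : (j.-1.-1 == val c0) = false by apply/negbTE; move/eqP: h1; lia.
  case: hj => [|hc]; first by rewrite ej eqxx.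
  have hc' : Defs.coord w j.-1 = 0 by rewrite ej.
  by rewrite h2 !addr0 hc' oppr0 Psi0 !mul0r !subr0 normr0.
case: (boolP (j.-1.-1 == val c0)) => h2.
  have ej : j.-1 = (val c0).+1 by move/eqP: h2; move/eqP: h1; lia.
  rewrite !addr0 ej coordS wc0 add0r oppr0 Psi0 !mul0r subrr subr0.
  set b := Defs.coord w j.
  apply: (le_trans (ler_normB _ _)); rewrite !normrM !(ger0_norm (Psi_ge0 _)).
  have := Psi_le (-r); have := Psi_le r; have := Phi_bound (- b); have := Phi_bound b.
  have := Psi_ge0 (-r); have := Psi_ge0 r; have := normr_ge0 (Phi b); have := normr_ge0 (Phi (-b)).
  rewrite sqrrN; nra.
by rewrite !addr0 subrr normr0.
Qed.

Definition active (m i c : nat) : bool :=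
  if (i <= m %/ 3)%N then ~~ odd c else if (i <= 2 * m %/ 3)%N then false else odd c.

Lemma comb3 (a a' s s' K : R) (n : R) : `|a' - a| <= K -> `|s' - s| <= n * K ->
  `|(a' + 3 * s') - (a + 3 * s)| <= (1 + 3 * n) * K.
Proof.
move=> h1 h2.
have -> : (a' + 3 * s') - (a + 3 * s) = (a' - a) + 3 * (s' - s) by ring.
apply: le_trans (ler_normD _ _) _; rewrite normrM (ger0_norm (_ : 0 <= 3 :> R)) //.
lra.
Qed.

Lemma hfunD m dbar i (w : 'cV[R]_dbar) (c0 : 'I_dbar) (r : R) :
  (1 <= val c0)%N -> w c0 0 = 0 ->
  (active m i (val c0).+1 -> Defs.coord w (val c0) = 0) ->
  `|hfun m i (w + r *: delta_mx c0 0) - hfun m i w|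
     <= (1 + 3 * dbar%:R) * (8 * pi * r ^+ 2).
Proof.
move=> c1 wc0 ha.
set K := 8 * pi * r ^+ 2.
have hK : 0 <= K by rewrite /K mulr_ge0 // ?sqr_ge0 // mulr_ge0 // pi_ge0.
have V (j : nat) : (j != (val c0).+1 \/ Defs.coord w (val c0) = 0) ->
    `|varphi (w + r *: delta_mx c0 0) j - varphi w j| <= K.
  exact: varphiD.
have V1 : `|varphi (w + r *: delta_mx c0 0) 1 - varphi w 1| <= K.
  by apply: V; left; rewrite eqSS eq_sym -lt0n.
have S (F : nat -> nat) : (forall j, F j != (val c0).+1 \/ Defs.coord w (val c0) = 0) ->
    `|\sum_(1 <= j < (dbar %/ 2).+1) varphi (w + r *: delta_mx c0 0) (F j)
      - \sum_(1 <= j < (dbar %/ 2).+1) varphi w (F j)| <= dbar%:R * K.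
  move=> HF; rewrite -sumrB; apply: le_trans (ler_norm_sum _ _ _) _.
  apply: le_trans (ler_sum _ (fun j _ => V _ (HF j))) _.
  rewrite sumr_const_nat subn1 /= -(mulr_natl K); apply: ler_wpM2r => //.
  by rewrite ler_nat div.leq_div.
have dge0 : 0 <= dbar%:R :> R by [].
rewrite /hfun /active in ha *; case: ifP => h1 /=.
  apply: comb3 => //; apply: S => j.
  case: (boolP (odd (val c0).+1)) => ho; last by right; apply: ha; rewrite h1.
  by left; apply/eqP => e; move: ho; rewrite -e oddM.
case: ifP => h2 /=.
  apply: le_trans V1 _; rewrite -[X in X <= _]mul1r ler_wpM2r // lerDl.
  by rewrite mulr_ge0.
apply: comb3 => //; apply: S => j.
case: (boolP (odd (val c0).+1)) => ho; first by right; apply: ha; rewrite h1 h2.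
by left; apply/eqP => e; move: ho; rewrite -e addn1 /= oddM.
Qed.

Lemma derive1_quad (f : R -> R) (K : R) :
  (forall r, `|f r - f 0| <= K * r ^+ 2) -> derive1 f 0 = 0.
Proof.
move=> hf.
have K0 : 0 <= K by have := hf 1; rewrite expr1n mulr1; apply: le_trans.
rewrite /derive1; apply: cvg_lim => //.
apply/cvgr0Pnorm_lt => e e0.
have e1 : 0 < e / (K + 1) by rewrite divr_gt0 //; lra.
near=> h.
have [->|hn] := eqVneq h 0; first by rewrite invr0 scale0r normr0.
have hl : `|h| < e / (K + 1) by near: h; exact: dnbhs0_lt.
have hp : 0 < `|h| by rewrite normr_gt0.
rewrite addr0 normrZ normfV mulrC.
have h2 : `|h| ^+ 2 = h ^+ 2 by rewrite real_normK // num_real.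
have := hf h; rewrite -h2 => hb.
rewrite ltr_pdivrMr //.
move: hl; rewrite ltr_pdivlMr; last lra.
move=> hl; nra.
Unshelve. all: by end_near.
Qed.

Lemma blk_add_unit m dbar (x : 'cV[R]_(m * dbar)) (k : 'I_m) (c0 : 'I_dbar)
    (r : R) (i : 'I_m) :
  blk (x + r *: unitv R (mxvec_index k c0)) i =
  blk x i + (if i == k then r *: delta_mx c0 0 else 0).
Proof.
apply/colP => j; rewrite !mxE mxvec_index_eq.
by case: (i == k); rewrite !mxE ?andbF ?mulr0.
Qed.

Lemma grad_zero m dbar (eps Lf : R) (x : 'cV[R]_(m * dbar)) (k : 'I_m) (c0 : 'I_dbar) :
  (1 <= val c0)%N -> x (mxvec_index k c0) 0 = 0 ->
  (active m (val k).+1 (val c0).+1 -> Defs.coord (blk x k) (val c0) = 0) ->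
  grad (f0fun eps Lf) x (mxvec_index k c0) 0 = 0.
Proof.
move=> c1 xz ha.
rewrite /grad mxE.
set C := 300 * pi * eps ^+ 2 / (m%:R * Lf).
set a := Num.sqrt m%:R * Lf / (150 * pi * eps).
apply: (@derive1_quad _ (`|C| * ((1 + 3 * dbar%:R) * (8 * pi * a ^+ 2)))) => r.
rewrite scale0r addr0 /f0fun -sumrB (bigD1 k) //= big1 => [|i ik]; last first.
  by rewrite blk_add_unit (negPf ik) addr0 subrr.
rewrite addr0 blk_add_unit eqxx /ffun_i -/C -/a -mulrBr normrM scalerDr scalerA.
have := @hfunD m dbar (val k).+1 (a *: blk x k) c0 (a * r) c1.
rewrite !mxE xz mulr0 coordZ => /(_ erefl) hb.
apply: le_trans (ler_wpM2l (normr_ge0 C) (hb _)) _.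
  by move=> /ha ->; rewrite mulr0.
by rewrite exprMn le_eqVlt; apply/orP; left; apply/eqP; ring.
Qed.

Lemma Jrows_nz p (S : {set 'I_p}) r c : Jrows R S r c != 0 ->
  val c = val (enum_val r) \/ val c = (val (enum_val r)).+1.
Proof.
rewrite mxE; case: ifP => [/eqP->|_]; first by left.
by case: ifP => [/eqP->|_]; [right | rewrite eqxx].
Qed.

Lemma AtA_zero m m1 dbar (Lf : R) (x : 'cV[R]_(m * dbar)) (k : 'I_m) (c0 : 'I_dbar) :
  (forall k' : 'I_m, (val k' <= (val k).+1)%N -> (val k <= (val k').+1)%N ->
     x (mxvec_index k' c0) 0 = 0) ->
  ((Amat m m1 dbar Lf)^T *m (Amat m m1 dbar Lf *m x)) (mxvec_index k c0) 0 = 0.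
Proof.
move=> hx; rewrite /Amat.
have JN := @Jrows_nz _ (MC m m1).
set J := Jrows R (MC m m1) in JN *; clearbody J.
rewrite mxE; apply: big1 => rr _.
rewrite !mxE unpairK /=.
case: (boolP (J (unpair rr).1 k == 0)) => [/eqP->|hJ].
  by rewrite !mul0r mulr0 mul0r.
case E1 : (_ == c0); last by rewrite mulr0 mulr0 mul0r.
move/eqP: E1 => E1.
rewrite big1 ?mulr0 // => l _.
case/mxvec_indexP: l => k' j'.
rewrite !mxE unpairK /=.
case: (boolP (J (unpair rr).1 k' == 0)) => [/eqP->|hJ'].
  by rewrite !mul0r mulr0 mul0r.
case E2 : (_ == j'); last by rewrite mulr0 mulr0 mul0r.
move/eqP: E2 => E2.
rewrite -E2 E1 hx ?mulr0 //.
  by case: (JN _ _ hJ) => e1; case: (JN _ _ hJ') => e2; lia.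
by case: (JN _ _ hJ) => e1; case: (JN _ _ hJ') => e2; lia.
Qed.

Definition uu (m1 k : nat) : nat := (k - k %/ m1)%N.

Lemma uuS m1 k : (0 < m1)%N -> uu m1 k.+1 = (uu m1 k + 1 - (m1 %| k.+1))%N.
Proof.
move=> h; rewrite /uu divnS //; move: (k %/ m1)%N (div.leq_div k m1) => q hq.
by case: (m1 %| k.+1)%N; lia.
Qed.

Lemma uu_edge m1 k : (0 < m1)%N -> (m1 %| k.+1)%N -> uu m1 k.+1 = uu m1 k.
Proof. by move=> h hd; rewrite uuS // hd; lia. Qed.

Lemma uu_step m1 k : (0 < m1)%N -> (uu m1 k <= uu m1 k.+1 <= (uu m1 k).+1)%N.
Proof. by move=> h; rewrite uuS //; case: (m1 %| k.+1)%N; lia. Qed.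

Lemma uu_mono m1 k k' : (0 < m1)%N -> (k <= k')%N -> (uu m1 k <= uu m1 k')%N.
Proof.
move=> h; elim: k' => [|k' IH]; first by rewrite leqn0 => /eqP->.
rewrite leq_eqVlt => /orP[/eqP->//|]; rewrite ltnS => /IH.
by have := @uu_step m1 k' h; lia.
Qed.

Lemma uu_lip m1 a b : (0 < m1)%N -> (a <= b.+1)%N -> (b <= a.+1)%N ->
  (uu m1 a <= (uu m1 b).+1)%N.
Proof.
move=> h h1 h2; case: (leqP a b) => hab.
  by have := @uu_mono m1 a b h hab; lia.
have -> : a = b.+1 by lia.
by have := @uu_step m1 b h; lia.
Qed.

Lemma prox_zero m m1 dbar (beta eta : R) (xi p : 'cV[R]_(m * dbar)) (i : 'I_m)
    (c0 : 'I_dbar) :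
  (0 < m1)%N -> 0 <= beta -> 0 < eta ->
  is_prox (gfun m1 beta) eta xi p ->
  (forall k : 'I_m, uu m1 k = uu m1 i -> xi (mxvec_index k c0) 0 = 0) ->
  p (mxvec_index i c0) 0 = 0.
Proof.
move=> m1p b0 e0 hp hxi.
pose Z (l : 'I_(m * dbar)) := ((unpair l).2 == c0) && (uu m1 (unpair l).1 == uu m1 i).
pose p' := \col_l (if Z l then 0 else p l 0).
have hblk k j : blk p' k j 0 = if (j == c0) && (uu m1 k == uu m1 i) then 0 else blk p k j 0.
  by rewrite !mxE /Z unpairK.
have hg : gfun m1 beta p' <= gfun m1 beta p.
  rewrite /gfun; apply: ler_wpM2l => //; apply: ler_sum => i0 _.
  apply: ler_sum => i1 /andP[/eqP e1 hd]; apply: ler_sum => j _.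
  have eu : uu m1 i1 = uu m1 i0 by rewrite e1 uu_edge.
  by rewrite !hblk eu; case: ifP => _ //; rewrite subr0 normr0 normr_ge0.
have hsq : sqnorm (p' - xi) + (p (mxvec_index i c0) 0) ^+ 2 <= sqnorm (p - xi).
  rewrite /sqnorm (bigD1 (mxvec_index i c0)) //= [X in _ <= X](bigD1 (mxvec_index i c0)) //=.
  rewrite !mxE /Z unpairK !eqxx /= hxi // !subr0 expr2 mul0r add0r [X in X <= _]addrC lerD2l.
  apply: ler_sum => l _; case/mxvec_indexP: l => k j.
  rewrite !mxE /Z unpairK /=; case: ifP => // /andP[/eqP -> /eqP hu].
  by rewrite hxi // !subr0 expr2 mul0r sqr_ge0.
have := hp p'.
set S := sqnorm (p - xi); set S' := sqnorm (p' - xi).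
set q := p (mxvec_index i c0) 0 in hsq *.
have iep : 0 < (2 * eta)^-1 by rewrite invr_gt0 mulr_gt0.
move: iep; set ie := (2 * eta)^-1 => iep hpp.
have h3 := ler_wpM2r (ltW iep) hsq; rewrite -/S -/S' mulrDl in h3.
have hq2 : q ^+ 2 * ie <= 0 by lra.
have hq : q ^+ 2 <= 0 by nra.
have : q ^+ 2 == 0 by rewrite eq_le hq sqr_ge0.
by rewrite sqrf_eq0 => /eqP.
Qed.

Lemma opnorm_ge0 p q (A : 'M[R]_(p, q)) : 0 <= opnorm A.
Proof.
rewrite /opnorm; set E := [set _ | _ in _].
have sq0 : sqnorm (0 : 'cV[R]_q) = 0 by rewrite /sqnorm big1 // => k _; rewrite mxE expr2 mul0r.
have sqA0 : sqnorm (A *m 0) = 0 by rewrite mulmx0 /sqnorm big1 // => k _; rewrite mxE expr2 mul0r.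
have E0 : E 0.
  exists 0; first by rewrite /= /enorm sq0 sqrtr0 ler01.
  by rewrite /enorm sqA0 sqrtr0.
case: (pselect (has_sup E)) => h; last by rewrite sup_out.
exact: (ub_le_sup h.2 E0).
Qed.

End S.

Theorem proposition3 (R : realType) (eps Lf beta : R) (m1 m2 dbar : nat)
  (x : nat -> 'cV[R]_(3 * m1 * m2 * dbar)) :
  0 < eps < 1 -> 0 < Lf ->
  (2 <= m1)%N -> (1 <= m2)%N -> ~~ odd (m1 * m2) ->
  odd dbar -> (5 <= dbar)%N ->
  (50 * pi + 1 + opnorm (@Amat R (3 * m1 * m2) m1 dbar Lf)) * Num.sqrt ((3 * m1 * m2)%N%:R) * eps
    < beta ->
  algorithm_class1 (@f0fun R (3 * m1 * m2) dbar eps Lf)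
    (@gfun R (3 * m1 * m2) m1 dbar beta)
    (@Amat R (3 * m1 * m2) m1 dbar Lf) 0 x ->
  x 0%N = 0 ->
  forall jbar : nat, (2 <= jbar <= dbar)%N ->
  forall t : nat, (6 * t <= 6 + 3 * m1 * m2 * (jbar - 2))%N ->
  forall i : 'I_(3 * m1 * m2),
    supp (blk (x t) i) `<=` [set k : nat | (1 <= k <= jbar.-1)%N].
Proof.
move=> /andP[eps0 eps1] Lf0 m1ge m2ge hev hodd d5 hbeta halg hx0 jbar /andP[j2 jd] t ht i.
have m1p : (0 < m1)%N by lia.
have b0 : 0 <= beta.
  have h1 := @opnorm_ge0 R _ _ (Amat (3 * m1 * m2) m1 dbar Lf).
  have h2 := pi_ge0 R.
  have h3 := sqrtr_ge0 ((3 * m1 * m2)%N%:R : R).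
  have h4 : 0 <= (50 * pi + 1 + opnorm (Amat (3 * m1 * m2) m1 dbar Lf)) *
                Num.sqrt ((3 * m1 * m2)%N%:R) * eps.
    by rewrite mulr_ge0 ?(ltW eps0) // mulr_ge0 //; lra.
  lra.
pose D := (m2 * (m1 - 1))%N.
pose L := Lf_ D.
have inv : forall (t : nat) (k : 'I_(3 * m1 * m2)) (c0 : 'I_dbar),
    (t < L (val c0).+1 (uu m1 k))%N -> x t (mxvec_index k c0) 0 = 0.
  elim/ltn_ind => t' IH k c0 hlt.
  case: t' IH hlt => [|t'] IH hlt; first by rewrite hx0 mxE.
  have c1 : (1 <= val c0)%N.
    by move: hlt; rewrite /L /Lf_; case: (val c0) => [|n] //=.
  have [eta [e0 [xi [[c1f [c2f [c3f [c4f hxi]]]] [p [hp [a1 [a2 hxt]]]]]]]] := halg t'.+1 isT.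
  have XI : forall k' : 'I_(3 * m1 * m2), uu m1 k' = uu m1 k ->
      xi (mxvec_index k' c0) 0 = 0.
    move=> k' hu; rewrite hxi mulmx0 summxE; apply: big1 => s _.
    have hs : (s < t'.+1)%N := ltn_ord s.
    have E1 : x s (mxvec_index k' c0) 0 = 0.
      by apply: IH => //; rewrite hu; lia.
    have E2 : grad (f0fun eps Lf) (x s) (mxvec_index k' c0) 0 = 0.
      apply: grad_zero => // hact.
      have hc' : ((val c0).-1 < dbar)%N := leq_ltn_trans (leq_pred _) (ltn_ord c0).
      have ec : val c0 = (val (Ordinal hc')).+1 by rewrite /= prednK.
      rewrite ec coordS mxE; apply: IH => //.
      rewrite -ec.
      have hLL : (L (val c0).+1 (uu m1 k') <= (L (val c0) (uu m1 k')).+1)%N.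
        move: hact; rewrite /active.
        have e3 : ((3 * m1 * m2) %/ 3 = m1 * m2)%N by rewrite -!mulnA mulKn.
        have e6 : ((2 * (3 * m1 * m2)) %/ 3 = 2 * m1 * m2)%N.
          by rewrite (_ : (2 * (3 * m1 * m2) = 3 * (2 * m1 * m2))%N) ?mulKn //; lia.
        rewrite e3 e6; case: ifP => hk1.
          have hk1' : (nat_of_ord k' < m1 * m2)%N := hk1.
          move=> hev'; apply: L_even => //.
          have := @uu_mono m1 k' (m1 * m2 - 1)%N m1p ltac:(lia).
          by rewrite {2}/uu uu_P //; lia.
        case: ifP => hk2 // hod; apply: L_odd => //.
        have hk2' : (nat_of_ord k' < 2 * m1 * m2)%N = false := hk2.
        have := @uu_mono m1 (2 * m1 * m2)%N k' m1p ltac:(lia).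
        by rewrite {1}/uu uu_2P.
      move: hLL hlt; rewrite hu; lia.
    have E4 : ((Amat (3 * m1 * m2) m1 dbar Lf)^T *m (Amat (3 * m1 * m2) m1 dbar Lf *m x s))
        (mxvec_index k' c0) 0 = 0.
      apply: AtA_zero => k'' h1 h2; apply: IH => //.
      have := @L_lip D (val c0).+1 (uu m1 k') (uu m1 k'')
        (@uu_lip m1 _ _ m1p h2 h1) (@uu_lip m1 _ _ m1p h1 h2).
      rewrite -/L hu; lia.
    move: E1 E2 E4.
    move: (grad _ (x s)) (_ *m (_ *m x s)) => g z.
    move: (x s) => w E1 E2 E4.
    by rewrite !mxE E1 E2 E4 !mulr0 !addr0.
  have P0 := @prox_zero R _ _ _ _ _ _ _ _ _ m1p b0 e0 hp XI.
  by rewrite hxt !mxE XI // P0 !mulr0 addr0.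
move=> kk [j [-> hj]] /=.
rewrite ltnNge; apply/negP => hlt; move: hj; rewrite mxE inv ?eqxx //.
have hl := @L_low D (val j).+1 (uu m1 i).
have hlt' : (jbar.-1 <= val j)%N by exact: hlt.
have hj2 : (2 <= (val j).+1)%N by lia.
have hl' := hl hj2.
have hPD : (m1 * m2 <= 2 * (D + 1))%N.
  rewrite /D; have [a ->] : exists a, m1 = (a + 2)%N by exists (m1 - 2)%N; lia.
  have -> : (a + 2 - 1 = a + 1)%N by lia.
  nia.
have hm : ((jbar - 2) * (D + 1) <= ((val j).+1 - 2) * (D + 1))%N by apply: leq_mul; lia.
rewrite /L; move: hl' hm ht hPD.
move: (jbar - 2)%N ((val j).+1 - 2)%N (Lf_ D (val j).+1 (uu m1 i)) (D + 1)%N => W J X E.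
move=> hl' hm ht hPD.
have hW : (m1 * m2 * W <= 2 * E * W)%N by apply: leq_mul.
rewrite (mulnC 2 E) -mulnA in hW.
move: hW ht; rewrite -!mulnA; move: (m1 * (m2 * W))%N (E * W)%N => a b.
rewrite (mulnC W E) in hm; lia.
Qed.
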